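(* For every sequence ${\mathbf s}$ in $\widehat{\mathcal S}$, the inclusion ${\mathcal X}_T({\mathbf s})\subset\bigoplus_{\sigma\in I({\mathbf s})}S_T$ becomes an isomorphism after applying $-\otimes_{S_T}Q_T$.
   Context: $R$ irreducible reduced finite root system (positive roots $R^+$, simple roots $\Pi$, highest root $\gamma$); $\widehat X=X\oplus\mathbb Z$ ($X$ weight lattice), $\delta=(0,-1)$, affine roots $\widehat R=\{\alpha+n\delta:\alpha\in R,n\in\mathbb Z\}$. $\widehat{\mathcal W}$ is generated by $s_{\alpha,n}(v,m)=(v-(\langle\alpha,v\rangle-mn)\alpha^\vee,m)$ and acts contragrediently on $\widehat X$; $\widehat{\mathcal S}=\{s_{\alpha,0}:\alpha\in\Pi\}\cup\{s_{\gamma,1}\}$ with attached simple affine roots $\alpha$ resp. $-\gamma+\delta$. $T$: commutative unital domain, $2$ not a zero divisor, all $\alpha\otimes1$ ($\alpha\in\widehat R$) nonzero in $\widehat X\otimes T$. $S_T$: symmetric algebra of $\widehat X\otimes T$, graded in even degrees. $Q_T=S_T[2^{-1}][\alpha^{-1}:\alpha\in\widehat R]$. For ${\mathbf s}=(s_1,\dots,s_l)$: $I({\mathbf s})$ = strictly increasing tuples in $\{1,\dots,l\}$ (including the empty one), $\operatorname{ev}(i_1,\dots,i_n)=s_{i_1}\cdots s_{i_n}$; ${\mathbf s}'=(s_1,\dots,s_{l-1})$, $I({\mathbf s})=I({\mathbf s}')\sqcup I({\mathbf s}')s_l$ (appending $l$); $\Delta(z)_\gamma=\Delta(z)_{\gamma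 s_l}=z_\gamma$; $c^\lambda$ multiplies the $\sigma$-component by $\operatorname{ev}(\sigma)(\lambda)\otimes1$; $\alpha_l$ the simple affine root of $s_l$. ${\mathcal X}_T(\emptyset)=S_T$, ${\mathcal X}_T({\mathbf s})=\Delta({\mathcal X}_T({\mathbf s}'))+c^{\alpha_l}(\Delta({\mathcal X}_T({\mathbf s}')))\subset\bigoplus_{\sigma\in I({\mathbf s})}S_T$. *)

(* Defs.v *)
From HB Require Import structures.
From mathcomp Require Import all_boot all_algebra.
From mathcomp Require Import mpoly.
Set Implicit Arguments. Unset Strict Implicit. Unset Printing Implicit Defensive.
Import GRing.Theory Num.Theory.
Local Open Scope ring_scope.

(* The weight lattice X is Z^n ('rV[int]_n, coordinates e.g. in the basis of
   fundamental weights), the coweight lattice X^v = Hom(X,Z) is also 'rV[int]_n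
   with the standard pairing. *)
Definition pairing (n : nat) (l v : 'rV[int]_n) : int := \sum_(i < n) l 0 i * v 0 i.

Definition zspan (n : nat) (S : seq 'rV[int]_n) (v : 'rV[int]_n) : Prop :=
  exists c : 'rV[int]_n -> int, v = \sum_(a <- S) c a *: a.

Definition srefl (n : nat) (cor : 'rV[int]_n -> 'rV[int]_n) (a b : 'rV[int]_n) :=
  b - pairing b (cor a) *: a.
Definition corefl (n : nat) (cor : 'rV[int]_n -> 'rV[int]_n) (a v : 'rV[int]_n) :=
  v - pairing a v *: cor a.

(* (X, R, X^v, R^v) is the root datum of an irreducible reduced finite root
   system R (with coroot map cor), and X is the weight lattice, i.e. the
   coroots span X^v = Hom(X,Z) over Z and the roots span X over Q. *)
Definition irr_red_root_system_wtlattice (n : nat) (R : seq 'rV[int]_n)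
    (cor : 'rV[int]_n -> 'rV[int]_n) : Prop :=
  [/\ R != [::], uniq R, 0 \notin R,
      (forall a, a \in R -> pairing a (cor a) = 2) &
      (forall a b, a \in R -> b \in R -> srefl cor a b \in R)] /\
  (forall a b, a \in R -> b \in R -> cor (srefl cor a b) = corefl cor a (cor b)) /\
  (forall a b, a \in R -> b \in R -> forall p q : int, (p != 0) || (q != 0) ->
      p *: a = q *: b -> b = a \/ b = - a) /\
  (forall P : pred 'rV[int]_n,
      (forall a b, a \in R -> b \in R -> P a -> ~~ P b -> pairing b (cor a) = 0) ->
      all P R \/ all (predC P) R) /\
  (forall v, zspan (map cor R) v) /\
  (forall v, exists q : int, q != 0 /\ zspan R (q *: v)).

Definition is_base (n : nat) (R Pi : seq 'rV[int]_n) : Prop :=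
  [/\ uniq Pi, {subset Pi <= R},
      (forall c : 'rV[int]_n -> int, \sum_(p <- Pi) c p *: p = 0 ->
          forall p, p \in Pi -> c p = 0) &
      (forall a, a \in R -> exists c : 'rV[int]_n -> int,
          a = \sum_(p <- Pi) c p *: p /\
          ((forall p, p \in Pi -> 0 <= c p) \/ (forall p, p \in Pi -> c p <= 0)))].

Definition highest_root (n : nat) (R Pi : seq 'rV[int]_n) (gam : 'rV[int]_n) : Prop :=
  gam \in R /\ forall b, b \in R -> exists c : 'rV[int]_n -> int,
    (forall p, p \in Pi -> 0 <= c p) /\ gam - b = \sum_(p <- Pi) c p *: p.

(* Xhat = X (+) Z, elements (lambda, k); delta = (0, -1). *)
(* A generator s_{alpha,m} of the affine Weyl group is encoded by (alpha, m). *)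
Definition in_Shat (n : nat) (Pi : seq 'rV[int]_n) (gam : 'rV[int]_n)
    (g : 'rV[int]_n * int) : Prop :=
  (g.1 \in Pi /\ g.2 = 0) \/ g = (gam, 1).

(* Contragredient action of s_{alpha,m} on Xhat:
   (lambda,k) |-> (lambda,k) - <lambda,alpha^v> (alpha, m),
   dual to s_{alpha,m}(v,m') = (v - (<alpha,v> - m' m) alpha^v, m')
   for the pairing <(lambda,k),(v,m')> = <lambda,v> - k m'. *)
Definition sact (n : nat) (cor : 'rV[int]_n -> 'rV[int]_n)
    (g : 'rV[int]_n * int) (x : 'rV[int]_n * int) : 'rV[int]_n * int :=
  let c := pairing x.1 (cor g.1) in (x.1 - c *: g.1, x.2 - g.2 * c).

(* ev(sigma)(x), sigma encoded as a mask m over s (m_i = true iff i in sigma). *)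
Definition ev (n : nat) (cor : 'rV[int]_n -> 'rV[int]_n)
    (s : seq ('rV[int]_n * int)) (m : seq bool) (x : 'rV[int]_n * int) :=
  foldr (fun p acc => if p.2 then sact cor p.1 acc else acc) x (zip s m).

(* simple affine root attached to a generator in Shat:
   s_{alpha,0} |-> alpha = (alpha,0);  s_{gam,1} |-> -gam + delta = (-gam,-1). *)
Definition sroot (n : nat) (g : 'rV[int]_n * int) : 'rV[int]_n * int :=
  if g.2 == 0 then (g.1, 0) else (- g.1, -1).

(* x |-> x (x) 1 : Xhat -> Xhat (x) T  inside S_T = Sym(Xhat (x) T) = T[X_0..X_n]
   (variables X_0..X_{n-1} for the basis of X, X_n for the Z-summand). *)
Definition emb (T : comNzRingType) (n : nat) (x : 'rV[int]_n * int) : {mpoly T[n.+1]} :=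
  \sum_(i < n) ((x.1 0 i)%:~R : T) *: 'X_(widen_ord (leqnSn n) i)
  + ((x.2)%:~R : T) *: 'X_ord_max.

(* Elements of (+)_{sigma in I(s)} S_T: functions on masks, only the masks of
   size (size s) matter.  Membership in X_T(s), defined by recursion on s
   read from the end (r = rev s). *)
Fixpoint XmemR (T : comNzRingType) (n : nat) (cor : 'rV[int]_n -> 'rV[int]_n)
    (r : seq ('rV[int]_n * int)) (z : seq bool -> {mpoly T[n.+1]}) : Prop :=
  match r with
  | [::] => True
  | g :: r' => exists x y, XmemR cor r' x /\ XmemR cor r' y /\
      forall m : seq bool, size m = (size r').+1 ->
        z m = x (take (size r') m)
              + emb T (ev cor (rev r) m (sroot g)) * y (take (size r') m)
  end.

Definition Xmem (T : comNzRingType) (n : nat) (cor : 'rV[int]_n -> 'rV[int]_n)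
    (s : seq ('rV[int]_n * int)) (z : seq bool -> {mpoly T[n.+1]}) : Prop :=
  XmemR cor (rev s) z.

(* d lies in the multiplicative set generated by 2 and the affine roots
   alpha + j delta = (alpha, -j), alpha in R, j in Z; Q_T = S_T[D^-1]. *)
Definition in_D (T : comNzRingType) (n : nat) (R : seq 'rV[int]_n) (d : {mpoly T[n.+1]}) : Prop :=
  exists (k : nat) (l : seq ('rV[int]_n * int)),
    all (fun a => a.1 \in R) l /\ d = 2 ^+ k * \prod_(a <- l) emb T a.

(* Main.v *)
Require Import Defs.
From HB Require Import structures.
From mathcomp Require Import all_boot all_algebra.
From mathcomp Require Import mpoly.
From mathcomp Require Import ring.
Set Implicit Arguments. Unset Strict Implicit.
Import GRing.Theory Num.Theory.
Local Open Scope ring_scope.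

Section Aux.
Variables (T : idomainType) (n : nat) (R : seq 'rV[int]_n)
    (cor : 'rV[int]_n -> 'rV[int]_n).

Definition pneg (x : 'rV[int]_n * int) : 'rV[int]_n * int := (- x.1, - x.2).

Lemma pairingN (v w : 'rV[int]_n) : pairing (- v) w = - pairing v w.
Proof.
rewrite /pairing -sumrN; apply: eq_bigr => i _; by rewrite mxE mulNr.
Qed.

Lemma sactN g x : sact cor g (pneg x) = pneg (sact cor g x).
Proof.
rewrite /sact /pneg /= pairingN; congr (_, _).
  by rewrite scaleNr opprD !opprK.
by rewrite mulrN opprD !opprK.
Qed.

Lemma evN s m x : ev cor s m (pneg x) = pneg (ev cor s m x).
Proof.
elim: s m => [|g s IH] [|b m] //=.
rewrite /ev /= -/(ev cor s m (pneg x)) -/(ev cor s m x) IH.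
by case: b => //; rewrite sactN.
Qed.

Lemma evR s m x : (forall g, g \in s -> g.1 \in R) ->
  (forall a b, a \in R -> b \in R -> srefl cor a b \in R) ->
  x.1 \in R -> (ev cor s m x).1 \in R.
Proof.
move=> Hs Hrefl Hx.
elim: s m Hs => [|g s IH] [|b m] Hs //=.
rewrite /ev /= -/(ev cor s m x).
have IH' := IH m (fun g' Hg' => Hs g' (@mem_behead _ (g :: s) g' Hg')).
case: b => //=; apply: Hrefl => //; apply: Hs; exact: mem_head.
Qed.

Lemma ev_rcons s g m b x : size s = size m ->
  ev cor (rcons s g) (rcons m b) x = ev cor s m (if b then sact cor g x else x).
Proof. by move=> H; rewrite /ev zip_rcons // foldr_rcons. Qed.

Lemma embN x : emb T (pneg x) = - emb T x.
Proof.
rewrite /emb /pneg /= opprD -sumrN; congr (_ + _).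
  apply: eq_bigr => i _; by rewrite mxE mulrNz scaleNr.
by rewrite mulrNz scaleNr.
Qed.

Lemma XmemR_scale r (c : {mpoly T[n.+1]}) z :
  XmemR cor r z -> XmemR cor r (fun m => c * z m).
Proof.
elim: r z => [|g r IH] z //= [x [y [Hx [Hy Hz]]]].
exists (fun m => c * x m), (fun m => c * y m); split; first exact: IH.
split; first exact: IH.
move=> m Hm; rewrite Hz //; ring.
Qed.

Lemma in_D1 : in_D (T:=T) R 1.
Proof. exists 0%N, [::]; by rewrite big_nil expr0 mulr1. Qed.

Lemma in_D2 : in_D (T:=T) R 2.
Proof. exists 1%N, [::]; by rewrite big_nil expr1 mulr1. Qed.

Lemma in_Demb x : x.1 \in R -> in_D (T:=T) R (emb T x).
Proof. move=> Hx; exists 0%N, [:: x]; by rewrite big_seq1 expr0 mul1r /= Hx. Qed.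

Lemma in_DM a b : in_D (T:=T) R a -> in_D R b -> in_D R (a * b).
Proof.
move=> [k [l [Hl ->]]] [k' [l' [Hl' ->]]].
exists (k + k')%N, (l ++ l'); rewrite all_cat Hl Hl'; split=> //.
rewrite big_cat exprD /=; ring.
Qed.

End Aux.

Theorem lemma6p3 (T : idomainType) (n : nat) (R : seq 'rV[int]_n)
    (cor : 'rV[int]_n -> 'rV[int]_n) (Pi : seq 'rV[int]_n) (gam : 'rV[int]_n)
    (HR : irr_red_root_system_wtlattice R cor) (HPi : is_base R Pi)
    (Hgam : highest_root R Pi gam)
    (H2 : (2 : T) != 0)
    (Haff : forall a, a \in R -> forall j : int, emb T (a, j) != 0)
    (s : seq ('rV[int]_n * int)) (Hs : forall g, g \in s -> in_Shat Pi gam g) :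
  forall z : seq bool -> {mpoly T[n.+1]},
    exists2 d : {mpoly T[n.+1]}, in_D R d & Xmem cor s (fun m => d * z m).
Proof.
move: HR => [[_ _ _ Hpair Hrefl] _].
case: HPi => _ HPiR _ _.
case: Hgam => HgR _.
have Hg : forall g, g \in rev s ->
   [/\ g.1 \in R, (sroot g).1 \in R & sact cor g (sroot g) = pneg (sroot g)].
  move=> g; rewrite mem_rev => /Hs [[/HPiR Ha H0]|->].
    rewrite /sroot H0 eqxx /sact /pneg /= Hpair //; split=> //.
    congr (_, _); last by rewrite ?H0 ?mul0r ?subr0 ?oppr0.
    by rewrite scaler_nat mulr2n opprD addrA subrr sub0r.
  have Hn : pairing (- gam) (cor gam) = -2 by rewrite pairingN Hpair.
  have Hmg : - gam \in R.
    have := Hrefl _ _ HgR HgR; rewrite /srefl Hpair //.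
    by rewrite scaler_nat mulr2n opprD addrA subrr sub0r.
  rewrite /sroot /= /sact /pneg /= Hn; split=> //.
  congr (_, _).
    by rewrite scaleNr opprK scaler_nat mulr2n addrA addNr add0r opprK.
rewrite /Xmem.
elim: (rev s) Hg => [|g r IH] Hg z.
  by exists 1; [exact: in_D1|].
have [HgR' HsR Hsact] := Hg g (mem_head _ _).
have Hr : forall g', g' \in r -> _ := fun g' H => Hg g' (@mem_behead _ (g :: r) g' H).
have IH' := IH Hr.
set l' := size r.
pose a (m : seq bool) := emb T (ev cor (rev r) m (sroot g)).
pose M := [seq val t | t : l'.-tuple bool].
pose P := \prod_(m <- M) a m.
pose Q m' := \prod_(m <- rem m' M) a m.
pose z0 m' := z (rcons m' false).
pose z1 m' := z (rcons m' true).
have [dx Hdx Hx] := IH' (fun m' => P * (z0 m' + z1 m')).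
have [dy Hdy Hy] := IH' (fun m' => Q m' * (z0 m' - z1 m')).
exists (dx * dy * 2 * P).
  apply: in_DM; first apply: in_DM; first apply: in_DM => //; first exact: in_D2.
  apply: big_ind => //; [exact: in_D1|exact: in_DM|].
  move=> m _; apply: in_Demb; apply: evR => //.
  by move=> g' /[!mem_rev] /Hr [].
exists (fun m' => dy * (dx * (P * (z0 m' + z1 m')))).
exists (fun m' => dx * (dy * (Q m' * (z0 m' - z1 m')))).
split; first exact: XmemR_scale.
split; first exact: XmemR_scale.
move=> m; case/lastP: m => [|m' b] //; rewrite size_rcons => -[Hm'].
have -> : take l' (rcons m' b) = m' by rewrite /l' -Hm' -cats1 take_size_cat.
have HmM : m' \in M.
  have Hm2 : size m' == l' by rewrite Hm'.
  apply/mapP; exists (Tuple Hm2) => //; by rewrite mem_enum.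
have HP : P = a m' * Q m' by rewrite /P (big_rem _ HmM).
rewrite rev_cons ev_rcons ?size_rev ?Hm' //.
rewrite HP; case: b.
  rewrite Hsact evN embN -/(a m') -/(z1 m'); ring.
rewrite -/(a m') -/(z0 m'); ring.
Qed.
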